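(* Let $\mathcal{H}_{A_1},\dots,\mathcal{H}_{A_n}$ be finite-dimensional Hilbert spaces, and for each $m$ let $X_{A_m}$ and $Y_{A_m}$ be orthonormal bases of $\mathcal{H}_{A_m}$. Let $X_{A_1\cdots A_n}$ and $Y_{A_1\cdots A_n}$ be the product bases of $\mathcal{H}_{A_1}\otimes\cdots\otimes\mathcal{H}_{A_n}$ consisting of all tensor products of elements of the $X_{A_m}$, respectively of the $Y_{A_m}$. Fix $\lambda,\mu>0$ and define $$c_{A_m}(\lambda,\mu)=\inf_{\rho}\big[\lambda H(X_{A_m}|\rho)+\mu H(Y_{A_m}|\rho)\big],$$ the infimum over density matrices on $\mathcal{H}_{A_m}$, and $$c_{A_1\cdots A_n}(\lambda,\mu)=\inf_{\rho}\big[\lambda H(X_{A_1\cdots A_n}|\rho)+\mu H(Y_{A_1\cdots A_n}|\rho)\big],$$ the infimum over density matrices on $\mathcal{H}_{A_1}\otimes\cdots\otimes\mathcal{H}_{A_n}$. Then $$c_{A_1\cdots A_n}(\lambda,\mu)=\sum_{m=1}^n c_{A_m}(\lambda,\mu).$$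
   Context: A density matrix is a positive semidefinite operator of trace one. For an orthonormal basis $X=\{e_i\}$ of a finite-dimensional Hilbert space and a density matrix $\rho$, the outcome distribution is $p_i=\langle e_i|\rho|e_i\rangle$ and $H(X|\rho):=-\sum_i p_i\log p_i$ (Shannon entropy, with $0\log 0=0$ and a fixed logarithm base $>1$). *)

(* Defs.v *)
From Stdlib Require Import Reals.
Open Scope R_scope.

Definition C : Type := (R * R)%type.
Definition C0 : C := (0, 0).
Definition C1 : C := (1, 0).
Definition Cadd (a b : C) : C := (fst a + fst b, snd a + snd b).
Definition Cmul (a b : C) : C :=
  (fst a * fst b - snd a * snd b, fst a * snd b + snd a * fst b).
Definition Cconj (a : C) : C := (fst a, - snd a).
Definition Re (a : C) : R := fst a.

Fixpoint Csum (d : nat) (f : nat -> C) : C :=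
  match d with O => C0 | S d' => Cadd (Csum d' f) (f d') end.
Fixpoint Rsum (d : nat) (f : nat -> R) : R :=
  match d with O => 0 | S d' => Rsum d' f + f d' end.
Fixpoint Cprod (n : nat) (f : nat -> C) : C :=
  match n with O => C1 | S n' => Cmul (Cprod n' f) (f n') end.
Fixpoint nprod (n : nat) (f : nat -> nat) : nat :=
  match n with O => 1%nat | S n' => (nprod n' f * f n')%nat end.

(** Vectors of C^d are [nat -> C] (coordinates 0..d-1 relevant);
    operators on C^d are matrices [nat -> nat -> C]. *)
Definition vec := nat -> C.
Definition mat := nat -> nat -> C.

Definition inner (d : nat) (u v : vec) : C :=
  Csum d (fun i => Cmul (Cconj (u i)) (v i)).
Definition sandwich (d : nat) (u : vec) (A : mat) (v : vec) : C :=
  Csum d (fun j => Csum d (fun k => Cmul (Cmul (Cconj (u j)) (A j k)) (v k))).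
Definition trace (d : nat) (A : mat) : C := Csum d (fun i => A i i).

Definition density (d : nat) (rho : mat) : Prop :=
  (forall i j, (i < d)%nat -> (j < d)%nat -> rho i j = Cconj (rho j i)) /\
  (forall v : vec, 0 <= Re (sandwich d v rho v)) /\
  trace d rho = C1.

(** orthonormal basis {e_0,...,e_(d-1)} of C^d (d orthonormal vectors in
    C^d form a basis) *)
Definition onbasis (d : nat) (e : nat -> vec) : Prop :=
  forall i j, (i < d)%nat -> (j < d)%nat ->
    inner d (e i) (e j) = if Nat.eq_dec i j then C1 else C0.

(** outcome distribution p_i = <e_i|rho|e_i> (real for rho Hermitian) *)
Definition outcome (d : nat) (e : nat -> vec) (rho : mat) (i : nat) : R :=
  Re (sandwich d (e i) rho (e i)).

Definition plogp (b p : R) : R :=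
  if Req_dec_T p 0 then 0 else p * (ln p / ln b).

Definition Hent (b : R) (d : nat) (e : nat -> vec) (rho : mat) : R :=
  - Rsum d (fun i => plogp b (outcome d e rho i)).

Definition cost_set (b lam mu : R) (d : nat) (X Y : nat -> vec) : R -> Prop :=
  fun v => exists rho, density d rho /\
           v = lam * Hent b d X rho + mu * Hent b d Y rho.

Definition is_inf (S : R -> Prop) (c : R) : Prop :=
  (forall v, S v -> c <= v) /\ (forall c', (forall v, S v -> c' <= v) -> c' <= c).

(** An index i < prod_m d m of the product space is identified with the tuple
    (i_0, ..., i_(n-1)) of mixed-radix digits i_m = (i / prod_(k<m) d k) mod d m. *)
Definition totdim (n : nat) (d : nat -> nat) : nat := nprod n d.
Definition digit (d : nat -> nat) (m i : nat) : nat :=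
  Nat.modulo (Nat.div i (nprod m d)) (d m).

(** product basis: element i is X_0(i_0) (x) ... (x) X_(n-1)(i_(n-1)),
    whose j-th coordinate is prod_m X_m(i_m)(j_m) *)
Definition prod_basis (n : nat) (d : nat -> nat) (X : nat -> nat -> vec) : nat -> vec :=
  fun i j => Cprod n (fun m => X m (digit d m i) (digit d m j)).

(* Main.v *)
Require Import Defs.
From Stdlib Require Import Reals Lra Lia Psatz FunctionalExtensionality Classical Ring Arith.
Require Import Defs.
Open Scope R_scope.

Lemma Cext (a b : C) : fst a = fst b -> snd a = snd b -> a = b.
Proof. destruct a, b; simpl; intros; subst; reflexivity. Qed.

Definition Copp (a : C) : C := (- fst a, - snd a).
Definition Csub (a b : C) : C := Cadd a (Copp b).

Lemma Cring_th : ring_theory C0 C1 Cadd Cmul Csub Copp (@eq C).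
Proof.
  constructor; intros; apply Cext; unfold Csub, Copp, Cadd, Cmul, C0, C1; simpl; ring.
Qed.
Add Ring Cring : Cring_th.

Lemma Cconj_add a b : Cconj (Cadd a b) = Cadd (Cconj a) (Cconj b).
Proof. apply Cext; unfold Cconj, Cadd; simpl; ring. Qed.
Lemma Cconj_mul a b : Cconj (Cmul a b) = Cmul (Cconj a) (Cconj b).
Proof. apply Cext; unfold Cconj, Cmul; simpl; ring. Qed.
Lemma Cconj_conj a : Cconj (Cconj a) = a.
Proof. apply Cext; unfold Cconj; simpl; ring. Qed.
Lemma Cconj_0 : Cconj C0 = C0.
Proof. apply Cext; unfold Cconj, C0; simpl; ring. Qed.
Lemma Cconj_1 : Cconj C1 = C1.
Proof. apply Cext; unfold Cconj, C1; simpl; ring. Qed.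
Lemma Cconj_opp a : Cconj (Copp a) = Copp (Cconj a).
Proof. apply Cext; unfold Cconj, Copp; simpl; ring. Qed.

Definition RC (r : R) : C := (r, 0).
Lemma Cconj_RC r : Cconj (RC r) = RC r.
Proof. apply Cext; unfold Cconj, RC; simpl; ring. Qed.

Lemma Csum_ext d f g : (forall i, (i < d)%nat -> f i = g i) -> Csum d f = Csum d g.
Proof.
  induction d; intros H; simpl; auto.
  rewrite IHd by (intros; apply H; lia). rewrite H by lia. reflexivity.
Qed.
Lemma Rsum_ext d f g : (forall i, (i < d)%nat -> f i = g i) -> Rsum d f = Rsum d g.
Proof.
  induction d; intros H; simpl; auto.
  rewrite IHd by (intros; apply H; lia). rewrite H by lia. reflexivity.
Qed.
Lemma Csum_add d f g : Csum d (fun i => Cadd (f i) (g i)) = Cadd (Csum d f) (Csum d g).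
Proof. induction d; simpl. apply Cext; unfold C0, Cadd; simpl; ring. rewrite IHd; ring. Qed.
Lemma Rsum_add d f g : Rsum d (fun i => f i + g i) = Rsum d f + Rsum d g.
Proof. induction d; simpl. ring. rewrite IHd; ring. Qed.
Lemma Csum_mull d c f : Csum d (fun i => Cmul c (f i)) = Cmul c (Csum d f).
Proof. induction d; simpl. ring. rewrite IHd; ring. Qed.
Lemma Csum_mulr d c f : Csum d (fun i => Cmul (f i) c) = Cmul (Csum d f) c.
Proof. induction d; simpl. ring. rewrite IHd; ring. Qed.
Lemma Rsum_mull d c f : Rsum d (fun i => c * f i) = c * Rsum d f.
Proof. induction d; simpl. ring. rewrite IHd; ring. Qed.
Lemma Rsum_mulr d c f : Rsum d (fun i => f i * c) = Rsum d f * c.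
Proof. induction d; simpl. ring. rewrite IHd; ring. Qed.
Lemma Csum_opp d f : Csum d (fun i => Copp (f i)) = Copp (Csum d f).
Proof. induction d; simpl. ring. rewrite IHd; ring. Qed.
Lemma Rsum_opp d f : Rsum d (fun i => - f i) = - Rsum d f.
Proof. induction d; simpl. ring. rewrite IHd; ring. Qed.
Lemma Csum_conj d f : Cconj (Csum d f) = Csum d (fun i => Cconj (f i)).
Proof. induction d; simpl. apply Cconj_0. rewrite Cconj_add, IHd; auto. Qed.
Lemma Csum_zero d f : (forall i, (i<d)%nat -> f i = C0) -> Csum d f = C0.
Proof. intros H. rewrite (Csum_ext d f (fun _ => C0)) by auto. induction d; simpl; auto.
  rewrite IHd; [ring| intros; apply H; lia]. Qed.
Lemma Rsum_zero d f : (forall i, (i<d)%nat -> f i = 0) -> Rsum d f = 0.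
Proof. intros H. rewrite (Rsum_ext d f (fun _ => 0)) by auto. induction d; simpl; auto.
  rewrite IHd; [ring| intros; apply H; lia]. Qed.
Lemma Csum_swap n m (f : nat -> nat -> C) :
  Csum n (fun i => Csum m (fun j => f i j)) = Csum m (fun j => Csum n (fun i => f i j)).
Proof.
  induction n; simpl. symmetry; apply Csum_zero; auto.
  rewrite IHn, <- Csum_add. reflexivity.
Qed.
Lemma Rsum_swap n m (f : nat -> nat -> R) :
  Rsum n (fun i => Rsum m (fun j => f i j)) = Rsum m (fun j => Rsum n (fun i => f i j)).
Proof.
  induction n; simpl. symmetry; apply Rsum_zero; auto.
  rewrite IHn, <- Rsum_add. reflexivity.
Qed.
Lemma Csum_fst d f : fst (Csum d f) = Rsum d (fun i => fst (f i)).
Proof. induction d; simpl; auto. rewrite IHd; auto. Qed.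
Lemma Csum_snd d f : snd (Csum d f) = Rsum d (fun i => snd (f i)).
Proof. induction d; simpl; auto. rewrite IHd; auto. Qed.
Lemma Re_Csum d f : Re (Csum d f) = Rsum d (fun i => Re (f i)).
Proof. apply Csum_fst. Qed.

Lemma Csum_plus m k f : Csum (m + k) f = Cadd (Csum m f) (Csum k (fun a => f (m + a)%nat)).
Proof.
  induction k; simpl. rewrite Nat.add_0_r; ring.
  rewrite Nat.add_succ_r; simpl. rewrite IHk; ring.
Qed.
Lemma Rsum_plus m k f : Rsum (m + k) f = Rsum m f + Rsum k (fun a => f (m + a)%nat).
Proof.
  induction k; simpl. rewrite Nat.add_0_r; ring.
  rewrite Nat.add_succ_r; simpl. rewrite IHk; ring.
Qed.
Lemma Csum_split N d f :
  Csum (N * d) f = Csum d (fun l => Csum N (fun a => f (a + N * l)%nat)).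
Proof.
  induction d; simpl. rewrite Nat.mul_0_r; reflexivity.
  rewrite Nat.mul_succ_r, Csum_plus, IHd. f_equal. apply Csum_ext; intros.
  f_equal; lia.
Qed.
Lemma Rsum_split N d f :
  Rsum (N * d) f = Rsum d (fun l => Rsum N (fun a => f (a + N * l)%nat)).
Proof.
  induction d; simpl. rewrite Nat.mul_0_r; reflexivity.
  rewrite Nat.mul_succ_r, Rsum_plus, IHd. f_equal. apply Rsum_ext; intros.
  f_equal; lia.
Qed.

Definition delta (i j : nat) : C := if Nat.eq_dec i j then C1 else C0.
Lemma Csum_delta d k f : (k < d)%nat -> Csum d (fun i => Cmul (f i) (delta i k)) = f k.
Proof.
  induction d; intros Hk; [lia|]. simpl.
  destruct (Nat.eq_dec k d).
  - subst. rewrite Csum_zero. unfold delta; destruct Nat.eq_dec; try lia. ring.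
    intros i Hi. unfold delta; destruct Nat.eq_dec; [lia|ring].
  - rewrite IHd by lia. unfold delta; destruct Nat.eq_dec; try lia. ring.
Qed.
Lemma Csum_delta' d k f : (k < d)%nat -> Csum d (fun i => Cmul (f i) (delta k i)) = f k.
Proof.
  intros. rewrite <- (Csum_delta d k f) by auto. apply Csum_ext; intros.
  unfold delta; do 2 destruct Nat.eq_dec; auto; lia.
Qed.
Lemma Rsum_le d f g : (forall i, (i<d)%nat -> f i <= g i) -> Rsum d f <= Rsum d g.
Proof. induction d; simpl; intros; [lra|]. assert (f d <= g d) by (apply H; lia).
  assert (Rsum d f <= Rsum d g) by (apply IHd; intros; apply H; lia). lra. Qed.
Lemma Rsum_nonneg d f : (forall i, (i<d)%nat -> 0 <= f i) -> 0 <= Rsum d f.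
Proof. intros. rewrite <- (Rsum_zero d (fun _ => 0)) by auto. apply Rsum_le; auto. Qed.
Lemma Rsum_term_le d f k : (forall i, (i<d)%nat -> 0 <= f i) -> (k<d)%nat -> f k <= Rsum d f.
Proof. induction d; simpl; intros; [lia|]. destruct (Nat.eq_dec k d).
  - subst. assert (0 <= Rsum d f) by (apply Rsum_nonneg; intros; apply H; lia). lra.
  - assert (f k <= Rsum d f) by (apply IHd; [intros; apply H; lia| lia]).
    assert (0 <= f d) by (apply H; lia). lra. Qed.
Lemma Rsum_nonneg_zero d f : (forall i, (i<d)%nat -> 0 <= f i) -> Rsum d f = 0 ->
  forall k, (k<d)%nat -> f k = 0.
Proof. intros. assert (f k <= Rsum d f) by (apply Rsum_term_le; auto).
  assert (0 <= f k) by auto. lra. Qed.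

Definition norm2 (z : C) : R := fst z * fst z + snd z * snd z.
Lemma norm2_nonneg z : 0 <= norm2 z.
Proof. unfold norm2; nra. Qed.
Lemma conj_mul_self z : Cmul (Cconj z) z = RC (norm2 z).
Proof. apply Cext; unfold Cmul, Cconj, RC, norm2; simpl; ring. Qed.

Lemma inner_conj d u v : Cconj (inner d u v) = inner d v u.
Proof. unfold inner. rewrite Csum_conj. apply Csum_ext; intros.
  rewrite Cconj_mul, Cconj_conj; ring. Qed.

Lemma bessel d e v : onbasis d e ->
  Rsum d (fun i => norm2 (inner d (e i) v)) <= Rsum d (fun j => norm2 (v j)).
Proof.
  intros He.
  set (c := fun i => inner d (e i) v).
  set (s := fun j => Csum d (fun i => Cmul (c i) (e i j))).
  set (w := fun j => Csub (v j) (s j)).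
  assert (H0 : 0 <= Re (inner d w w)).
  { unfold inner. rewrite Re_Csum. apply Rsum_nonneg; intros.
    rewrite conj_mul_self. apply norm2_nonneg. }
  assert (E1 : Csum d (fun j => Cmul (Cconj (v j)) (s j)) =
               Csum d (fun i => Cmul (c i) (Cconj (c i)))).
  { unfold s. rewrite (Csum_ext _ _ (fun j => Csum d (fun i => Cmul (c i) (Cmul (Cconj (v j)) (e i j))))).
    2:{ intros. rewrite <- Csum_mull. apply Csum_ext; intros; ring. }
    rewrite Csum_swap. apply Csum_ext; intros i Hi. rewrite Csum_mull. f_equal.
    unfold c. rewrite inner_conj. reflexivity. }
  assert (E2 : Csum d (fun j => Cmul (Cconj (s j)) (v j)) =
               Csum d (fun i => Cmul (Cconj (c i)) (c i))).
  { unfold s. rewrite (Csum_ext _ _ (fun j => Csum d (fun i => Cmul (Cconj (c i)) (Cmul (Cconj (e i j)) (v j))))).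
    2:{ intros. rewrite Csum_conj, <- Csum_mulr. apply Csum_ext; intros; rewrite Cconj_mul; ring. }
    rewrite Csum_swap. apply Csum_ext; intros i Hi. rewrite Csum_mull. reflexivity. }
  assert (E3 : Csum d (fun j => Cmul (Cconj (s j)) (s j)) =
               Csum d (fun i => Cmul (Cconj (c i)) (c i))).
  { unfold s. rewrite (Csum_ext _ _ (fun j => Csum d (fun i => Csum d (fun t =>
        Cmul (Cmul (Cconj (c i)) (c t)) (Cmul (Cconj (e i j)) (e t j)))))).
    2:{ intros. rewrite Csum_conj, <- Csum_mulr. apply Csum_ext; intros.
        rewrite <- Csum_mull. apply Csum_ext; intros; rewrite Cconj_mul; ring. }
    rewrite Csum_swap. apply Csum_ext; intros i Hi. rewrite Csum_swap.
    rewrite (Csum_ext _ _ (fun t => Cmul (Cmul (Cconj (c i)) (c t)) (delta i t))).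
    2:{ intros t Ht. rewrite Csum_mull. f_equal. apply He; auto. }
    rewrite (Csum_ext _ _ (fun t => Cmul (Cmul (Cconj (c i)) (c t)) (delta t i))).
    2:{ intros; unfold delta; do 2 destruct Nat.eq_dec; auto; lia. }
    rewrite Csum_delta by auto. reflexivity. }
  assert (Ew : inner d w w = Csub (inner d v v) (Csum d (fun i => Cmul (Cconj (c i)) (c i)))).
  { unfold inner, w.
    rewrite (Csum_ext _ _ (fun j => Cadd (Cadd (Cmul (Cconj (v j)) (v j)) (Copp (Cmul (Cconj (v j)) (s j))))
       (Cadd (Copp (Cmul (Cconj (s j)) (v j))) (Cmul (Cconj (s j)) (s j))))).
    2:{ intros. unfold Csub. rewrite Cconj_add, Cconj_opp. ring. }
    rewrite !Csum_add, !Csum_opp, E1, E2, E3.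
    rewrite (Csum_ext _ (fun i => Cmul (c i) (Cconj (c i))) (fun i => Cmul (Cconj (c i)) (c i))) by (intros; ring).
    unfold Csub; ring. }
  rewrite Ew in H0. unfold Csub, Copp in H0. simpl in H0. unfold inner in H0.
  rewrite !Csum_fst in H0.
  rewrite (Rsum_ext _ _ (fun j => norm2 (v j))) in H0 by (intros; rewrite conj_mul_self; reflexivity).
  rewrite (Rsum_ext _ (fun i => fst (Cmul (Cconj (c i)) (c i))) (fun i => norm2 (c i))) in H0
    by (intros; rewrite conj_mul_self; reflexivity).
  unfold c in H0. lra.
Qed.

Definition ind (k : nat) (x : C) : vec := fun i => if Nat.eq_dec i k then x else C0.
Definition vadd (u v : vec) : vec := fun i => Cadd (u i) (v i).

Lemma Csum_ind d k x f : (k < d)%nat -> Csum d (fun i => Cmul (f i) (ind k x i)) = Cmul (f k) x.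
Proof. intros. rewrite <- (Csum_delta d k (fun i => Cmul (f i) x)) by auto.
  apply Csum_ext; intros. unfold ind, delta; destruct Nat.eq_dec; ring. Qed.
Lemma Rsum_ind d k x : (k < d)%nat -> Rsum d (fun i => norm2 (ind k x i)) = norm2 x.
Proof. intros. assert (H1 := Csum_ind d k x (fun i => Cconj (ind k x i)) H).
  apply (f_equal fst) in H1. rewrite Csum_fst in H1.
  rewrite (Rsum_ext _ _ (fun i => norm2 (ind k x i))) in H1 by (intros; rewrite conj_mul_self; reflexivity).
  rewrite H1. unfold ind. destruct Nat.eq_dec; [|lia]. rewrite conj_mul_self; reflexivity. Qed.

Lemma onb_diag d e : onbasis d e -> forall j, (j < d)%nat ->
  Rsum d (fun i => norm2 (e i j)) = 1.
Proof.
  intros He.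
  assert (Hle : forall j, (j<d)%nat -> Rsum d (fun i => norm2 (e i j)) <= 1).
  { intros j Hj. assert (Hb := bessel d e (ind j C1) He).
    rewrite Rsum_ind in Hb by auto.
    rewrite (Rsum_ext _ _ (fun i => norm2 (e i j))) in Hb.
    2:{ intros i Hi. unfold inner. rewrite Csum_ind by auto. unfold norm2, Cmul, Cconj, C1; simpl; ring. }
    unfold norm2, C1 in *; simpl in Hb. lra. }
  assert (Hs : Rsum d (fun j => Rsum d (fun i => norm2 (e i j))) = INR d).
  { rewrite Rsum_swap. rewrite (Rsum_ext _ _ (fun _ => 1)).
    - clear. induction d; simpl; auto. rewrite IHd. destruct d; simpl; ring.
    - intros i Hi. assert (H1 := He i i Hi Hi). unfold inner in H1.
      apply (f_equal fst) in H1. rewrite Csum_fst in H1.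
      rewrite (Rsum_ext _ _ (fun j => norm2 (e i j))) in H1 by (intros; rewrite conj_mul_self; reflexivity).
      rewrite H1. destruct Nat.eq_dec; [reflexivity|lia]. }
  assert (Hz : Rsum d (fun j => 1 - Rsum d (fun i => norm2 (e i j))) = 0).
  { unfold Rminus. rewrite Rsum_add, Rsum_opp, Hs.
    clear. induction d; simpl; [ring|]. unfold Rminus in IHd. 
    assert (Rsum d (fun _ => 1) = INR d) by lra. rewrite H. destruct d; simpl; ring. }
  intros j Hj.
  assert (Hn : forall i, (i<d)%nat -> 0 <= 1 - Rsum d (fun t => norm2 (e t i))).
  { intros i Hi. specialize (Hle i Hi). lra. }
  assert (H := Rsum_nonneg_zero d _ Hn Hz j Hj).
  simpl in H. lra.
Qed.

Lemma onb_complete d e : onbasis d e -> forall j k, (j < d)%nat -> (k < d)%nat ->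
  Csum d (fun i => Cmul (e i j) (Cconj (e i k))) = delta j k.
Proof.
  intros He j k Hj Hk. destruct (Nat.eq_dec j k).
  - subst. unfold delta; destruct Nat.eq_dec; [|lia].
    apply Cext.
    + rewrite Csum_fst. unfold C1; simpl. rewrite <- (onb_diag d e He k Hk). apply Rsum_ext; intros.
      unfold norm2, Cmul, Cconj; simpl; ring.
    + rewrite Csum_snd. unfold C1; simpl. apply Rsum_zero; intros.
      unfold Cmul, Cconj; simpl; ring.
  - unfold delta; destruct Nat.eq_dec; [lia|].
    set (G := Csum d (fun i => Cmul (e i j) (Cconj (e i k)))).
    set (x := Cconj G).
    assert (Hb := bessel d e (vadd (ind j C1) (ind k x)) He).
    assert (Hv : Rsum d (fun i => norm2 (vadd (ind j C1) (ind k x) i)) = 1 + norm2 x).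
    { rewrite (Rsum_ext _ _ (fun i => norm2 (ind j C1 i) + norm2 (ind k x i))).
      - rewrite Rsum_add, !Rsum_ind by auto. unfold norm2, C1; simpl; ring.
      - intros i Hi. unfold vadd, ind. do 2 destruct Nat.eq_dec; subst; try lia;
        unfold norm2, Cadd, C0, C1; simpl; ring. }
    rewrite Hv in Hb.
    assert (Hc : forall i, (i < d)%nat -> inner d (e i) (vadd (ind j C1) (ind k x)) =
                 Cadd (Cconj (e i j)) (Cmul x (Cconj (e i k)))).
    { intros i Hi. unfold inner, vadd.
      rewrite (Csum_ext _ _ (fun t => Cadd (Cmul (Cconj (e i t)) (ind j C1 t)) (Cmul (Cconj (e i t)) (ind k x t))))
        by (intros; ring).
      rewrite Csum_add, !Csum_ind by auto. ring. }
    rewrite (Rsum_ext _ _ (fun i => norm2 (e i j) + norm2 x * norm2 (e i k) + 2 * fst (Cmul x (Cmul (e i j) (Cconj (e i k)))))) in Hb.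
    2:{ intros i Hi. rewrite Hc by auto. unfold norm2, Cadd, Cmul, Cconj; simpl; ring. }
    rewrite !Rsum_add, Rsum_mull, Rsum_mull, !onb_diag in Hb by auto.
    rewrite <- Csum_fst, Csum_mull in Hb. fold G in Hb.
    assert (Hn : fst (Cmul x G) = norm2 G) by (unfold x; rewrite conj_mul_self; reflexivity).
    rewrite Hn in Hb. assert (norm2 G = 0) by (pose proof (norm2_nonneg G); lra).
    unfold norm2 in H. apply Cext; unfold C0; simpl; nra.
Qed.

Definition Re_trace_lemma := 0.
Lemma trace_onb d e M : onbasis d e ->
  Csum d (fun i => sandwich d (e i) M (e i)) = trace d M.
Proof.
  intros He. unfold sandwich, trace.
  rewrite (Csum_ext _ _ (fun i => Csum d (fun j => Csum d (fun k => Cmul (M j k) (Cmul (e i k) (Cconj (e i j)))))))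
    by (intros; apply Csum_ext; intros; apply Csum_ext; intros; ring).
  rewrite Csum_swap. apply Csum_ext; intros j Hj. rewrite Csum_swap.
  rewrite (Csum_ext _ _ (fun k => Cmul (M j k) (delta k j))).
  - apply Csum_delta; auto.
  - intros k Hk. rewrite Csum_mull. f_equal. apply onb_complete; auto.
Qed.

Lemma ln_le_sub1 y : 0 < y -> ln y <= y - 1.
Proof. intros. pose proof (exp_ineq1_le (ln y)). rewrite exp_ln in H0 by auto. lra. Qed.

Definition Lg (x : R) : R := if Req_dec_T x 0 then 0 else ln x.
Lemma plogp_Lg b x : 0 < ln b -> plogp b x * ln b = x * Lg x.
Proof. intros. unfold plogp, Lg. destruct Req_dec_T. ring. field. lra. Qed.
Lemma plogp_0 b : plogp b 0 = 0.
Proof. unfold plogp. destruct Req_dec_T; lra. Qed.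

Lemma plogp_mul b x y : 0 <= x -> 0 <= y -> plogp b (x * y) = x * plogp b y + y * plogp b x.
Proof.
  intros Hx Hy. unfold plogp.
  destruct (Req_dec_T y 0) as [Ey|Ey]; destruct (Req_dec_T x 0) as [Ex|Ex].
  - subst. destruct (Req_dec_T (0*0) 0); [ring| exfalso; apply n; ring].
  - subst. destruct (Req_dec_T (x*0) 0); [ring| exfalso; apply n; ring].
  - subst. destruct (Req_dec_T (0*y) 0); [ring| exfalso; apply n; ring].
  - destruct (Req_dec_T (x*y) 0) as [E|E].
    + exfalso. assert (0 < x) by lra. assert (0 < y) by lra. nra.
    + rewrite ln_mult by lra. unfold Rdiv. ring.
Qed.

Lemma chain_rule b d (P : nat -> R) : (forall i, (i<d)%nat -> 0 <= P i) ->
  Rsum d (fun i => plogp b (P i)) =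
  plogp b (Rsum d P) + Rsum d P * Rsum d (fun i => plogp b (P i / Rsum d P)).
Proof.
  intros HP. set (s := Rsum d P).
  assert (Hs : 0 <= s) by (apply Rsum_nonneg; auto).
  destruct (Req_dec_T s 0) as [E|E].
  - rewrite E, plogp_0, Rmult_0_l, Rplus_0_l. apply Rsum_zero. intros i Hi.
    rewrite (Rsum_nonneg_zero d P HP E i Hi). apply plogp_0.
  - rewrite (Rsum_ext _ _ (fun i => s * plogp b (P i / s) + (P i / s) * plogp b s)).
    + rewrite Rsum_add, Rsum_mull, Rsum_mulr.
      unfold Rdiv. rewrite Rsum_mulr. fold s. field_simplify; auto. 
    + intros i Hi. rewrite <- plogp_mul. f_equal. field; auto. lra.
      apply Rmult_le_pos; [auto| left; apply Rinv_0_lt_compat; lra].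
Qed.

Lemma subadd b N d (P : nat -> nat -> R) : 1 < b ->
  (forall a l, (a<N)%nat -> (l<d)%nat -> 0 <= P a l) ->
  Rsum N (fun a => Rsum d (P a)) = 1 ->
  Rsum N (fun a => plogp b (Rsum d (P a))) + Rsum d (fun l => plogp b (Rsum N (fun a => P a l)))
  <= Rsum N (fun a => Rsum d (fun l => plogp b (P a l))).
Proof.
  intros Hb HP H1.
  assert (Hlb : 0 < ln b) by (rewrite <- ln_1; apply ln_increasing; lra).
  set (al := fun a => Rsum d (P a)). set (be := fun l => Rsum N (fun a => P a l)).
  apply (Rmult_le_reg_r (ln b)); auto.
  rewrite Rmult_plus_distr_r, <- !Rsum_mulr.
  rewrite (Rsum_ext N _ (fun a => Rsum d (fun l => P a l * Lg (al a)))).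
  2:{ intros. rewrite plogp_Lg by auto. unfold al at 1. rewrite <- Rsum_mulr. reflexivity. }
  rewrite (Rsum_ext d _ (fun l => Rsum N (fun a => P a l * Lg (be l)))).
  2:{ intros. rewrite plogp_Lg by auto. unfold be at 1. rewrite <- Rsum_mulr. reflexivity. }
  rewrite (Rsum_swap d N (fun l a => P a l * Lg (be l))).
  rewrite (Rsum_ext N (fun a => Rsum d (fun l => plogp b (P a l)) * ln b) (fun a => Rsum d (fun l => P a l * Lg (P a l)))).
  2:{ intros. rewrite <- Rsum_mulr. apply Rsum_ext; intros. apply plogp_Lg; auto. }
  rewrite <- Rsum_add.
  assert (Hbe1 : Rsum d be = 1). { unfold be. rewrite <- Rsum_swap. exact H1. }
  assert (Hterm : forall a l, (a<N)%nat -> (l<d)%nat ->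
    P a l * Lg (al a) + P a l * Lg (be l) + (P a l - al a * be l) <= P a l * Lg (P a l)).
  { intros a l Ha Hl.
    assert (HPal : P a l <= al a) by (unfold al; apply Rsum_term_le; auto).
    assert (HPbe : P a l <= be l) by (unfold be; apply (Rsum_term_le N (fun a => P a l)); auto).
    assert (0 <= P a l) by auto.
    destruct (Req_dec_T (P a l) 0) as [E|E].
    - rewrite E. nra.
    - assert (0 < P a l) by lra. unfold Lg.
      destruct (Req_dec_T (al a) 0); [lra|]. destruct (Req_dec_T (be l) 0); [lra|].
      destruct (Req_dec_T (P a l) 0); [lra|].
      assert (Hl1 := ln_le_sub1 (al a * be l / P a l) ltac:(apply Rdiv_lt_0_compat; nra)).
      unfold Rdiv in Hl1. rewrite ln_mult in Hl1 by (try apply Rinv_0_lt_compat; nra).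
      rewrite ln_Rinv in Hl1 by lra. rewrite ln_mult in Hl1 by lra.
      assert (HH : P a l * (ln (al a) + ln (be l) - ln (P a l)) <= P a l * (al a * be l / P a l - 1))
        by (apply Rmult_le_compat_l; lra).
      replace (P a l * (al a * be l / P a l - 1)) with (al a * be l - P a l) in HH by (field; lra).
      lra. }
  assert (Hsum : Rsum N (fun a => Rsum d (fun l => P a l - al a * be l)) = 0).
  { rewrite (Rsum_ext N _ (fun a => al a - al a * Rsum d be)).
    - rewrite Hbe1. rewrite (Rsum_ext N _ (fun _ => 0)) by (intros; ring). apply Rsum_zero; auto.
    - intros a Ha. unfold Rminus. rewrite Rsum_add, Rsum_opp, Rsum_mull. reflexivity. }
  assert (Hle : Rsum N (fun a => Rsum d (fun l => P a l * Lg (al a)) + Rsum d (fun l => P a l * Lg (be l)))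
     + Rsum N (fun a => Rsum d (fun l => P a l - al a * be l))
     <= Rsum N (fun a => Rsum d (fun l => P a l * Lg (P a l)))).
  { rewrite <- Rsum_add. apply Rsum_le. intros a Ha. rewrite <- !Rsum_add. apply Rsum_le.
    intros l Hl. apply Hterm; auto. }
  lra.
Qed.

Definition herm (d : nat) (M : mat) : Prop :=
  forall i j, (i < d)%nat -> (j < d)%nat -> M i j = Cconj (M j i).
Definition psd (d : nat) (M : mat) : Prop := forall v : vec, 0 <= Re (sandwich d v M v).

Lemma sandwich_addl d u u' M w :
  sandwich d (vadd u u') M w = Cadd (sandwich d u M w) (sandwich d u' M w).
Proof. unfold sandwich, vadd. rewrite <- Csum_add. apply Csum_ext; intros.
  rewrite <- Csum_add. apply Csum_ext; intros. rewrite Cconj_add. ring. Qed.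
Lemma sandwich_addr d u M w w' :
  sandwich d u M (vadd w w') = Cadd (sandwich d u M w) (sandwich d u M w').
Proof. unfold sandwich, vadd. rewrite <- Csum_add. apply Csum_ext; intros.
  rewrite <- Csum_add. apply Csum_ext; intros. ring. Qed.
Lemma sandwich_addM d u M M' w :
  sandwich d u (fun j k => Cadd (M j k) (M' j k)) w = Cadd (sandwich d u M w) (sandwich d u M' w).
Proof. unfold sandwich. rewrite <- Csum_add. apply Csum_ext; intros.
  rewrite <- Csum_add. apply Csum_ext; intros. ring. Qed.
Lemma sandwich_scalM d u c M w :
  sandwich d u (fun j k => Cmul c (M j k)) w = Cmul c (sandwich d u M w).
Proof. unfold sandwich. rewrite <- Csum_mull. apply Csum_ext; intros.
  rewrite <- Csum_mull. apply Csum_ext; intros. ring. Qed.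
Lemma sandwich_rank1 d u r s w :
  sandwich d u (fun j k => Cmul (r j) (Cconj (s k))) w =
  Cmul (Csum d (fun j => Cmul (Cconj (u j)) (r j))) (Csum d (fun k => Cmul (Cconj (s k)) (w k))).
Proof. unfold sandwich. rewrite <- Csum_mulr. apply Csum_ext; intros.
  rewrite <- Csum_mull. apply Csum_ext; intros. ring. Qed.
Lemma sandwich_indl d k x M w : (k < d)%nat ->
  sandwich d (ind k x) M w = Cmul (Cconj x) (Csum d (fun l => Cmul (M k l) (w l))).
Proof. intros Hk. unfold sandwich.
  rewrite (Csum_ext _ _ (fun j => Cmul (Cmul (Cconj x) (Csum d (fun l => Cmul (M j l) (w l)))) (delta j k))).
  - apply Csum_delta; auto.
  - intros. unfold ind, delta. destruct Nat.eq_dec.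
    + rewrite <- Csum_mull, <- Csum_mulr. apply Csum_ext; intros; ring.
    + rewrite Csum_zero; [ring | intros; rewrite Cconj_0; ring].
Qed.
Lemma sandwich_indr d k y u M : (k < d)%nat ->
  sandwich d u M (ind k y) = Cmul (Csum d (fun j => Cmul (Cconj (u j)) (M j k))) y.
Proof. intros Hk. unfold sandwich. rewrite <- Csum_mulr. apply Csum_ext; intros j Hj.
  rewrite (Csum_ext _ _ (fun l => Cmul (Cmul (Cmul (Cconj (u j)) (M j l)) y) (delta l k))).
  - apply Csum_delta; auto.
  - intros. unfold ind, delta. destruct Nat.eq_dec; ring.
Qed.
Lemma sandwich_ind2 d j k x y M : (j < d)%nat -> (k < d)%nat ->
  sandwich d (ind j x) M (ind k y) = Cmul (Cmul (Cconj x) (M j k)) y.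
Proof. intros. rewrite sandwich_indl by auto. 
  rewrite (Csum_ext _ _ (fun l => Cmul (Cmul (M j l) y) (delta l k))).
  - rewrite Csum_delta by auto. ring.
  - intros. unfold ind, delta. destruct Nat.eq_dec; ring.
Qed.

Lemma sandwich_trunc d u M w : u d = C0 -> w d = C0 ->
  sandwich (S d) u M w = sandwich d u M w.
Proof. intros Hu Hw. unfold sandwich. simpl.
  rewrite Hu, Cconj_0, Hw. rewrite (Csum_zero d (fun k => Cmul (Cmul C0 (M d k)) (w k))) by (intros; ring).
  rewrite (Csum_ext d _ (fun j => Csum d (fun k => Cmul (Cmul (Cconj (u j)) (M j k)) (w k)))).
  ring. intros; ring.
Qed.

Definition trunc (d : nat) (v : vec) : vec := fun i => if lt_dec i d then v i else C0.
Lemma sandwich_trunc_ext d v M : sandwich d (trunc d v) M (trunc d v) = sandwich d v M v.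
Proof. unfold sandwich, trunc. apply Csum_ext; intros. apply Csum_ext; intros.
  do 2 (destruct lt_dec; try lia). reflexivity. Qed.

Lemma psd_restrict d M : psd (S d) M -> psd d M.
Proof. intros H v. rewrite <- sandwich_trunc_ext. rewrite <- sandwich_trunc.
  apply H. all: unfold trunc; destruct lt_dec; [lia|reflexivity]. Qed.

Lemma zero_row_decomp d :
  (forall M, herm d M -> psd d M -> exists w : nat -> vec, forall j k, (j<d)%nat -> (k<d)%nat ->
     M j k = Csum d (fun t => Cmul (w t j) (Cconj (w t k)))) ->
  forall M (z : vec), herm (S d) M -> psd (S d) M ->
  (forall k, (k < S d)%nat -> M d k = C0) ->
  exists w : nat -> vec, forall j k, (j<S d)%nat -> (k<S d)%nat ->
     Cadd (M j k) (Cmul (z j) (Cconj (z k))) = Csum (S d) (fun t => Cmul (w t j) (Cconj (w t k))).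
Proof.
  intros IH M z Hh Hp Hz.
  destruct (IH M) as [w0 Hw0].
  { intros i j Hi Hj; apply Hh; lia. }
  { apply psd_restrict; auto. }
  exists (fun t j => if Nat.eq_dec t d then z j else if lt_dec j d then w0 t j else C0).
  intros j k Hj Hk. simpl. destruct (Nat.eq_dec d d); [|lia]. f_equal.
  destruct (lt_dec j d), (lt_dec k d).
  - rewrite Hw0 by auto. apply Csum_ext; intros t Ht. destruct Nat.eq_dec; [lia|].
    repeat (destruct lt_dec; try lia); try reflexivity.
  - assert (k = d) by lia. subst. rewrite Hh by lia. rewrite Hz by lia. rewrite Cconj_0.
    symmetry; apply Csum_zero; intros t Ht. destruct Nat.eq_dec; [lia|].
    destruct (lt_dec d d); [lia|]. rewrite Cconj_0. ring.
  - assert (j = d) by lia. subst. rewrite Hz by lia.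
    symmetry; apply Csum_zero; intros t Ht. destruct Nat.eq_dec; [lia|].
    destruct (lt_dec d d); [lia|]. ring.
  - assert (j = d) by lia. subst. rewrite Hz by lia.
    symmetry; apply Csum_zero; intros t Ht. destruct Nat.eq_dec; [lia|].
    destruct (lt_dec d d); [lia|]. ring.
Qed.

Lemma herm_diag d M k : herm d M -> (k < d)%nat -> snd (M k k) = 0.
Proof. intros H Hk. pose proof (H k k Hk Hk). apply (f_equal snd) in H0.
  unfold Cconj in H0; simpl in H0. lra. Qed.
Lemma psd_diag d M k : psd d M -> (k < d)%nat -> 0 <= fst (M k k).
Proof. intros H Hk. pose proof (H (ind k C1)). rewrite sandwich_ind2 in H0 by auto.
  unfold Re, Cmul, Cconj, C1 in H0; simpl in H0. lra. Qed.

Lemma decomp d : forall M, herm d M -> psd d M -> exists w : nat -> vec,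
  forall j k, (j<d)%nat -> (k<d)%nat -> M j k = Csum d (fun t => Cmul (w t j) (Cconj (w t k))).
Proof.
  induction d as [|d IH].
  { intros. exists (fun _ _ => C0). intros; lia. }
  intros M Hh Hp.
  assert (HMdd : snd (M d d) = 0) by (apply (herm_diag (S d)); auto).
  assert (Hp0 : 0 <= fst (M d d)) by (apply (psd_diag (S d)); auto).
  set (p := fst (M d d)) in *.
  destruct (Req_dec_T p 0) as [E|E].
  - assert (Hrow : forall k, (k < S d)%nat -> M d k = C0).
    { intros k Hk. destruct (Nat.eq_dec k d).
      - subst. apply Cext; unfold C0; simpl; auto.
      - set (z := M d k). set (q := fst (M k k)).
        assert (Hq : 0 <= q) by (apply (psd_diag (S d)); auto).
        assert (Hqk : snd (M k k) = 0) by (apply (herm_diag (S d)); auto).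
        set (t := / (q + 1)).
        assert (Ht : 0 < t) by (unfold t; apply Rinv_0_lt_compat; lra).
        assert (Hqt : q * t < 1) by (unfold t; apply (Rmult_lt_reg_r (q+1)); [lra|]; field_simplify; lra).
        set (x := (- (t * fst z), t * snd z) : C).
        pose proof (Hp (vadd (ind k x) (ind d C1))) as H.
        rewrite sandwich_addl, !sandwich_addr, !sandwich_ind2 in H by lia.
        rewrite (Hh k d) in H by lia. fold z in H.
        unfold Re, Cadd, Cmul, Cconj, C1, x in H; simpl in H. fold p q in H.
        rewrite E, Hqk, HMdd in H.
        assert (HS : 0 <= fst z * fst z + snd z * snd z) by nra.
        replace (fst (M k k)) with q in H by reflexivity.
        assert (H' : 0 <= t * (fst z * fst z + snd z * snd z) * (q * t - 2)) by (ring_simplify; ring_simplify in H; lra).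
        assert (Hneg : t * (q * t - 2) < 0) by nra.
        assert (fst z * fst z + snd z * snd z <= 0).
        { destruct (Rle_dec (fst z * fst z + snd z * snd z) 0); auto.
          assert (0 < fst z * fst z + snd z * snd z) by lra.
          assert (t * (fst z * fst z + snd z * snd z) * (q * t - 2) < 0).
          { replace (t * (fst z * fst z + snd z * snd z) * (q * t - 2)) with
              ((fst z * fst z + snd z * snd z) * (t * (q * t - 2))) by ring.
            apply Rmult_pos_neg; auto. }
          lra. }
        apply Cext; unfold C0; simpl; nra. }
    destruct (zero_row_decomp d IH M (fun _ => C0) Hh Hp Hrow) as [w Hw].
    exists w. intros j k Hj Hk. rewrite <- Hw by auto. ring.
  - assert (Hpp : 0 < p) by lra.
    set (M' := fun j k => Cadd (M j k) (Cmul (RC (-/p)) (Cmul (M j d) (Cconj (M k d))))).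
    set (z := fun j => Cmul (RC (/sqrt p)) (M j d)).
    assert (HMdd' : M d d = RC p) by (apply Cext; unfold RC; simpl; auto).
    assert (Hh' : herm (S d) M').
    { intros i j Hi Hj. unfold M'. rewrite Cconj_add, !Cconj_mul, Cconj_RC, Cconj_conj.
      rewrite (Hh i j) by auto. ring. }
    assert (Hrow : forall k, (k < S d)%nat -> M' d k = C0).
    { intros k Hk. unfold M'. rewrite HMdd'. rewrite <- (Hh d k) by lia.
      apply Cext; unfold Cadd, Cmul, RC, C0; simpl; field; lra. }
    assert (Hp' : psd (S d) M').
    { intros v.
      set (s := Csum (S d) (fun k => Cmul (Cconj (M k d)) (v k))).
      set (t := Cmul (RC (-/p)) s).
      pose proof (Hp (vadd v (ind d t))) as H.
      rewrite sandwich_addl, !sandwich_addr, sandwich_ind2, sandwich_indl, sandwich_indr in H by lia.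
      assert (E1 : Csum (S d) (fun j => Cmul (Cconj (v j)) (M j d)) = Cconj s).
      { unfold s. rewrite Csum_conj. apply Csum_ext; intros. rewrite Cconj_mul, Cconj_conj. ring. }
      assert (E2 : Csum (S d) (fun l => Cmul (M d l) (v l)) = s).
      { unfold s. apply Csum_ext; intros. rewrite (Hh d i) by lia. ring. }
      rewrite E1, E2, HMdd' in H.
      unfold M'. rewrite sandwich_addM, sandwich_scalM, sandwich_rank1.
      rewrite E1. fold s.
      replace (Re (Cadd (sandwich (S d) v M v) (Cmul (RC (- / p)) (Cmul (Cconj s) s))))
        with (Re (Cadd (Cadd (sandwich (S d) v M v) (Cmul (Cconj s) t))
          (Cadd (Cmul (Cconj t) s) (Cmul (Cmul (Cconj t) (RC p)) t)))); auto.
      unfold t. rewrite Cconj_mul, Cconj_RC. unfold Re, Cadd, Cmul, Cconj, RC; simpl. field. lra. }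
    destruct (zero_row_decomp d IH M' z Hh' Hp' Hrow) as [w Hw].
    exists w. intros j k Hj Hk. rewrite <- Hw by auto. unfold M', z.
    rewrite Cconj_mul, Cconj_RC.
    assert (Hs : Cmul (RC (/ sqrt p)) (RC (/ sqrt p)) = RC (/p)).
    { apply Cext; unfold Cmul, RC; simpl. rewrite <- Rinv_mult, sqrt_sqrt by lra. ring. ring. }
    transitivity (Cadd (M j k) (Cmul (Cadd (RC (-/p)) (Cmul (RC (/ sqrt p)) (RC (/ sqrt p)))) (Cmul (M j d) (Cconj (M k d))))).
    + rewrite Hs. replace (Cadd (RC (- / p)) (RC (/ p))) with C0. ring.
      apply Cext; unfold Cadd, RC, C0; simpl; ring.
    + ring.
Qed.

Lemma idx_mod N a l : (a < N)%nat -> ((a + N * l) mod N = a)%nat.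
Proof. intros. rewrite Nat.mul_comm, Nat.Div0.mod_add. apply Nat.mod_small; auto. Qed.
Lemma idx_div N a l : (a < N)%nat -> ((a + N * l) / N = l)%nat.
Proof. intros. rewrite Nat.mul_comm, Nat.div_add by lia. rewrite Nat.div_small; auto. Qed.
Lemma idx_bound N d a l : (a < N)%nat -> (l < d)%nat -> (a + N * l < N * d)%nat.
Proof. intros. nia. Qed.

Lemma swap4 n1 n2 n3 n4 (f : nat -> nat -> nat -> nat -> C) :
  Csum n1 (fun j => Csum n2 (fun k => Csum n3 (fun l => Csum n4 (fun l' => f j k l l')))) =
  Csum n3 (fun l => Csum n4 (fun l' => Csum n1 (fun j => Csum n2 (fun k => f j k l l')))).
Proof.
  rewrite (Csum_ext n1 _ (fun j => Csum n3 (fun l => Csum n2 (fun k => Csum n4 (fun l' => f j k l l'))))).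
  2:{ intros. apply Csum_swap. }
  rewrite (Csum_ext n1 _ (fun j => Csum n3 (fun l => Csum n4 (fun l' => Csum n2 (fun k => f j k l l'))))).
  2:{ intros. apply Csum_ext; intros. apply Csum_swap. }
  rewrite Csum_swap. apply Csum_ext; intros. apply Csum_swap.
Qed.

Lemma sand_expand N d v M v' : sandwich (N*d) v M v' =
  Csum d (fun l => Csum d (fun l' => Csum N (fun j => Csum N (fun k =>
    Cmul (Cmul (Cconj (v (j+N*l)%nat)) (M (j+N*l)%nat (k+N*l')%nat)) (v' (k+N*l')%nat))))).
Proof.
  unfold sandwich. rewrite Csum_split. apply Csum_ext; intros l Hl.
  rewrite (Csum_ext N _ (fun j => Csum d (fun l' => Csum N (fun k =>
    Cmul (Cmul (Cconj (v (j+N*l)%nat)) (M (j+N*l)%nat (k+N*l')%nat)) (v' (k+N*l')%nat))))).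
  - apply Csum_swap.
  - intros. apply Csum_split.
Qed.

Definition kron (N : nat) (u w : vec) : vec := fun i => Cmul (u (i mod N)%nat) (w (i / N)%nat).
Definition kb (N : nat) (E X : nat -> vec) : nat -> vec :=
  fun i => kron N (E (i mod N)%nat) (X (i / N)%nat).

Definition Qf N d (u w u' w' : vec) (M : mat) : C :=
  Csum d (fun l => Csum d (fun l' => Csum N (fun j => Csum N (fun k =>
    Cmul (Cmul (Cconj (w l)) (Cmul (Cmul (Cconj (u j)) (M (j+N*l)%nat (k+N*l')%nat)) (u' k))) (w' l'))))).

Lemma sand_kron N d u w u' w' M :
  sandwich (N*d) (kron N u w) M (kron N u' w') = Qf N d u w u' w' M.
Proof.
  rewrite sand_expand. unfold Qf, kron. apply Csum_ext; intros l Hl. apply Csum_ext; intros l' Hl'.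
  apply Csum_ext; intros j Hj. apply Csum_ext; intros k Hk.
  rewrite !idx_mod, !idx_div by auto. rewrite Cconj_mul. ring.
Qed.

Definition redA N d (w w' : vec) (M : mat) : mat := fun j k =>
  Csum d (fun l => Csum d (fun l' => Cmul (Cmul (Cconj (w l)) (M (j+N*l)%nat (k+N*l')%nat)) (w' l'))).
Definition redB N (u u' : vec) (M : mat) : mat := fun l l' =>
  Csum N (fun j => Csum N (fun k => Cmul (Cmul (Cconj (u j)) (M (j+N*l)%nat (k+N*l')%nat)) (u' k))).

Lemma redB_sand N d u u' w w' M :
  sandwich d w (redB N u u' M) w' = sandwich (N*d) (kron N u w) M (kron N u' w').
Proof.
  rewrite sand_kron. unfold sandwich, Qf, redB. apply Csum_ext; intros l Hl. apply Csum_ext; intros l' Hl'.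
  rewrite <- Csum_mull, <- Csum_mulr. apply Csum_ext; intros j Hj.
  rewrite <- Csum_mull, <- Csum_mulr. apply Csum_ext; intros k Hk. ring.
Qed.

Lemma redA_sand N d u u' w w' M :
  sandwich N u (redA N d w w' M) u' = sandwich (N*d) (kron N u w) M (kron N u' w').
Proof.
  rewrite sand_kron. unfold sandwich, Qf, redA.
  rewrite (Csum_ext N _ (fun j => Csum N (fun k => Csum d (fun l => Csum d (fun l' =>
    Cmul (Cmul (Cconj (w l)) (Cmul (Cmul (Cconj (u j)) (M (j+N*l)%nat (k+N*l')%nat)) (u' k))) (w' l')))))).
  - apply swap4.
  - intros j Hj. apply Csum_ext; intros k Hk. rewrite <- Csum_mull, <- Csum_mulr.
    apply Csum_ext; intros l Hl. rewrite <- Csum_mull, <- Csum_mulr. apply Csum_ext; intros; ring.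
Qed.

Lemma redA_herm N d w M : herm (N*d) M -> herm N (redA N d w w M).
Proof.
  intros H j k Hj Hk. unfold redA. rewrite Csum_conj. symmetry.
  rewrite (Csum_ext d _ (fun l => Csum d (fun l' =>
      Cmul (Cmul (Cconj (w l')) (M (j + N * l')%nat (k + N * l)%nat)) (w l)))).
  - apply Csum_swap.
  - intros l Hl. rewrite Csum_conj. apply Csum_ext; intros l' Hl'.
    rewrite !Cconj_mul, Cconj_conj. rewrite (H (j + N*l')%nat (k + N*l)%nat) by (apply idx_bound; auto).
    ring.
Qed.
Lemma redB_herm N d u M : herm (N*d) M -> herm d (redB N u u M).
Proof.
  intros H l l' Hl Hl'. unfold redB. rewrite Csum_conj. symmetry.
  rewrite (Csum_ext N _ (fun j => Csum N (fun k =>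
      Cmul (Cmul (Cconj (u k)) (M (k + N * l)%nat (j + N * l')%nat)) (u j)))).
  - apply Csum_swap.
  - intros j Hj. rewrite Csum_conj. apply Csum_ext; intros k Hk.
    rewrite !Cconj_mul, Cconj_conj. rewrite (H (k + N*l)%nat (j + N*l')%nat) by (apply idx_bound; auto).
    ring.
Qed.
Lemma redA_psd N d w M : psd (N*d) M -> psd N (redA N d w w M).
Proof. intros H v. rewrite redA_sand. apply H. Qed.
Lemma redB_psd N d u M : psd (N*d) M -> psd d (redB N u u M).
Proof. intros H v. rewrite redB_sand. apply H. Qed.

Definition scaleM (c : R) (M : mat) : mat := fun j k => Cmul (RC c) (M j k).

Lemma trace_snd D M : herm D M -> snd (trace D M) = 0.
Proof. intros H. unfold trace. rewrite Csum_snd. apply Rsum_zero. intros. eapply herm_diag; eauto. Qed.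

Lemma cond_density D M t : herm D M -> psd D M -> fst (trace D M) = t -> 0 < t ->
  density D (scaleM (/t) M).
Proof.
  intros Hh Hp Ht Htp. split; [|split].
  - intros i j Hi Hj. unfold scaleM. rewrite Cconj_mul, Cconj_RC, <- Hh; auto.
  - intros v. unfold scaleM. rewrite sandwich_scalM. pose proof (Hp v).
    unfold Re, Cmul, RC in *; simpl. ring_simplify.
    apply Rmult_le_pos; auto. left; apply Rinv_0_lt_compat; auto.
  - unfold trace, scaleM. rewrite Csum_mull. fold (trace D M).
    pose proof (trace_snd D M Hh). apply Cext; unfold Cmul, RC, C1; simpl; rewrite ?H, ?Ht.
    field; lra. ring.
Qed.

Lemma outcome_scale D e c M i : outcome D e (scaleM c M) i = c * outcome D e M i.
Proof. unfold outcome, scaleM. rewrite sandwich_scalM. unfold Re, Cmul, RC; simpl. ring. Qed.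

Lemma inner_kron N d u w u' w' :
  inner (N*d) (kron N u w) (kron N u' w') = Cmul (inner N u u') (inner d w w').
Proof.
  unfold inner. rewrite Csum_split. rewrite <- Csum_mull. apply Csum_ext; intros l Hl.
  rewrite <- Csum_mulr. apply Csum_ext; intros a Ha. unfold kron.
  rewrite !idx_mod, !idx_div by auto. rewrite Cconj_mul. ring.
Qed.

Lemma onbasis_kb N d E X : onbasis N E -> onbasis d X -> onbasis (N*d) (kb N E X).
Proof.
  intros HE HX i j Hi Hj. unfold kb. rewrite inner_kron.
  assert (HN : (N <> 0)%nat) by (intro; subst; simpl in Hi; lia).
  assert (Him : (i mod N < N)%nat) by (apply Nat.mod_upper_bound; auto).
  assert (Hjm : (j mod N < N)%nat) by (apply Nat.mod_upper_bound; auto).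
  assert (Hid : (i / N < d)%nat) by (apply Nat.Div0.div_lt_upper_bound; lia).
  assert (Hjd : (j / N < d)%nat) by (apply Nat.Div0.div_lt_upper_bound; lia).
  rewrite HE, HX by auto.
  pose proof (Nat.div_mod i N HN). pose proof (Nat.div_mod j N HN).
  destruct (Nat.eq_dec i j).
  - subst. do 2 (destruct Nat.eq_dec; try lia). ring.
  - destruct (Nat.eq_dec (i mod N) (j mod N)), (Nat.eq_dec (i / N) (j / N)).
    + exfalso. apply n. rewrite H, H0, e, e0. reflexivity.
    + ring.
    + ring.
    + ring.
Qed.

Lemma cond_lb D e f M t c b lam mu : herm D M -> psd D M -> fst (trace D M) = t -> 0 <= t ->
  (forall v, cost_set b lam mu D e f v -> c <= v) ->
  t * c <= t * (lam * (- Rsum D (fun i => plogp b (Re (sandwich D (e i) M (e i)) / t))) +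
                mu * (- Rsum D (fun i => plogp b (Re (sandwich D (f i) M (f i)) / t)))).
Proof.
  intros Hh Hp Ht Ht0 Hc. destruct (Req_dec_T t 0) as [E0|E0].
  { rewrite E0, !Rmult_0_l; lra. }
  assert (Htp : 0 < t) by lra.
  apply Rmult_le_compat_l; [lra|]. apply Hc.
  exists (scaleM (/t) M). split. apply cond_density; auto.
  unfold Hent.
  rewrite (Rsum_ext D (fun i => plogp b (outcome D e (scaleM (/ t) M) i)) (fun i => plogp b (Re (sandwich D (e i) M (e i)) / t))).
  rewrite (Rsum_ext D (fun i => plogp b (outcome D f (scaleM (/ t) M) i)) (fun i => plogp b (Re (sandwich D (f i) M (f i)) / t))).
  reflexivity.
  all: intros i Hi; rewrite outcome_scale; unfold outcome, Rdiv; f_equal; ring.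
Qed.

Lemma hent_kb b N d E X M :
  Hent b (N*d) (kb N E X) M =
  - Rsum N (fun a => Rsum d (fun l => plogp b (Re (sandwich (N*d) (kron N (E a) (X l)) M (kron N (E a) (X l)))))).
Proof.
  unfold Hent. f_equal. rewrite Rsum_split, Rsum_swap. apply Rsum_ext; intros a Ha.
  apply Rsum_ext; intros l Hl. unfold outcome, kb. rewrite idx_mod, idx_div by auto. reflexivity.
Qed.

Lemma margB N d X u M : onbasis d X ->
  Rsum d (fun l => Re (sandwich (N*d) (kron N u (X l)) M (kron N u (X l)))) = fst (trace d (redB N u u M)).
Proof.
  intros HX. rewrite <- (trace_onb d X) by auto. rewrite Csum_fst. apply Rsum_ext; intros.
  rewrite redB_sand. reflexivity.
Qed.
Lemma margA N d E w M : onbasis N E ->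
  Rsum N (fun a => Re (sandwich (N*d) (kron N (E a) w) M (kron N (E a) w))) = fst (trace N (redA N d w w M)).
Proof.
  intros HE. rewrite <- (trace_onb N E) by auto. rewrite Csum_fst. apply Rsum_ext; intros.
  rewrite redA_sand. reflexivity.
Qed.
Lemma total_trace N d E M : onbasis N E ->
  Csum N (fun a => trace d (redB N (E a) (E a) M)) = trace (N*d) M.
Proof.
  intros HE. unfold trace at 1. unfold redB. rewrite Csum_swap.
  unfold trace. rewrite Csum_split. apply Csum_ext; intros l Hl.
  apply (trace_onb N E (fun j k => M (j + N*l)%nat (k + N*l)%nat)); auto.
Qed.

Lemma lower_bound b lam mu N d E F X Y cA cB rho : 1 < b -> 0 < lam -> 0 < mu ->
  onbasis N E -> onbasis N F -> onbasis d X -> onbasis d Y ->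
  (forall v, cost_set b lam mu N E F v -> cA <= v) ->
  (forall v, cost_set b lam mu d X Y v -> cB <= v) ->
  density (N*d) rho ->
  cA + cB <= lam * Hent b (N*d) (kb N E X) rho + mu * Hent b (N*d) (kb N F Y) rho.
Proof.
  intros Hb Hlam Hmu HE HF HX HY HcA HcB [Hh [Hp Htr]].
  pose (S := fun u w => Re (sandwich (N*d) (kron N u w) rho (kron N u w))).
  pose (P1 := fun a l => S (E a) (X l)).
  pose (P2 := fun a l => S (F a) (Y l)).
  pose (P3 := fun a l => S (E a) (Y l)).
  pose (al := fun a => fst (trace d (redB N (E a) (E a) rho))).
  pose (be := fun l => fst (trace N (redA N d (Y l) (Y l) rho))).
  assert (HS : forall u w, 0 <= S u w) by (intros; apply Hp).
  rewrite !hent_kb.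
  change (cA + cB <= lam * - Rsum N (fun a => Rsum d (fun l => plogp b (P1 a l))) + mu * - Rsum N (fun a => Rsum d (fun l => plogp b (P2 a l)))).
  assert (Ha1 : forall a, Rsum d (P1 a) = al a) by (intros; apply margB; auto).
  assert (Ha3 : forall a, Rsum d (P3 a) = al a) by (intros; apply margB; auto).
  assert (Hb2 : forall l, Rsum N (fun a => P2 a l) = be l) by (intros; apply margA; auto).
  assert (Hb3 : forall l, Rsum N (fun a => P3 a l) = be l) by (intros; apply margA; auto).
  assert (Hsa : Rsum N al = 1).
  { unfold al. rewrite <- Csum_fst, total_trace by auto. rewrite Htr. reflexivity. }
  assert (Hsb : Rsum d be = 1).
  { rewrite (Rsum_ext d be (fun l => Rsum N (fun a => P3 a l))) by (intros; symmetry; auto).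
    rewrite <- Rsum_swap. rewrite (Rsum_ext N _ al) by (intros; auto). auto. }
  pose (U1 := fun a => Rsum d (fun l => plogp b (P1 a l / al a))).
  pose (U3 := fun a => Rsum d (fun l => plogp b (P3 a l / al a))).
  pose (V2 := fun l => Rsum N (fun a => plogp b (P2 a l / be l))).
  pose (V3 := fun l => Rsum N (fun a => plogp b (P3 a l / be l))).
  assert (C1 : forall a, (a < N)%nat -> Rsum d (fun l => plogp b (P1 a l)) = plogp b (al a) + al a * U1 a).
  { intros a Ha. unfold U1. rewrite <- (Ha1 a). apply chain_rule. intros; apply HS. }
  assert (C3 : forall a, (a < N)%nat -> Rsum d (fun l => plogp b (P3 a l)) = plogp b (al a) + al a * U3 a).
  { intros a Ha. unfold U3. rewrite <- (Ha3 a). apply chain_rule. intros; apply HS. }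
  assert (C2 : forall l, (l < d)%nat -> Rsum N (fun a => plogp b (P2 a l)) = plogp b (be l) + be l * V2 l).
  { intros l Hl. unfold V2. rewrite <- (Hb2 l). apply (chain_rule b N (fun a => P2 a l)). intros; apply HS. }
  assert (C3' : forall l, (l < d)%nat -> Rsum N (fun a => plogp b (P3 a l)) = plogp b (be l) + be l * V3 l).
  { intros l Hl. unfold V3. rewrite <- (Hb3 l). apply (chain_rule b N (fun a => P3 a l)). intros; apply HS. }
  assert (LB : forall a, (a < N)%nat -> al a * cB <= al a * (lam * (- U1 a) + mu * (- U3 a))).
  { intros a Ha. unfold U1, U3.
    pose proof (cond_lb d X Y (redB N (E a) (E a) rho) (al a) cB b lam mu
      (redB_herm N d (E a) rho Hh) (redB_psd N d (E a) rho Hp) eq_refl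
      ltac:(rewrite <- Ha1; apply Rsum_nonneg; intros; apply HS) HcB) as H.
    rewrite (Rsum_ext d (fun i => plogp b (Re (sandwich d (X i) (redB N (E a) (E a) rho) (X i)) / al a)) (fun i => plogp b (P1 a i / al a))) in H.
    rewrite (Rsum_ext d (fun i => plogp b (Re (sandwich d (Y i) (redB N (E a) (E a) rho) (Y i)) / al a)) (fun i => plogp b (P3 a i / al a))) in H.
    exact H. all: intros i Hi; rewrite redB_sand; reflexivity. }
  assert (LA : forall l, (l < d)%nat -> be l * cA <= be l * (lam * (- V3 l) + mu * (- V2 l))).
  { intros l Hl. unfold V2, V3.
    pose proof (cond_lb N E F (redA N d (Y l) (Y l) rho) (be l) cA b lam mu
      (redA_herm N d (Y l) rho Hh) (redA_psd N d (Y l) rho Hp) eq_refl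
      ltac:(rewrite <- Hb2; apply Rsum_nonneg; intros; apply HS) HcA) as H.
    rewrite (Rsum_ext N (fun i => plogp b (Re (sandwich N (E i) (redA N d (Y l) (Y l) rho) (E i)) / be l)) (fun i => plogp b (P3 i l / be l))) in H.
    rewrite (Rsum_ext N (fun i => plogp b (Re (sandwich N (F i) (redA N d (Y l) (Y l) rho) (F i)) / be l)) (fun i => plogp b (P2 i l / be l))) in H.
    exact H. all: intros i Hi; rewrite redA_sand; reflexivity. }
  assert (SUB : Rsum N (fun a => plogp b (al a)) + Rsum d (fun l => plogp b (be l))
                <= Rsum N (fun a => Rsum d (fun l => plogp b (P3 a l)))).
  { pose proof (subadd b N d P3 Hb ltac:(intros; apply HS)
      ltac:(rewrite (Rsum_ext N _ al) by (intros; auto); auto)) as H.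
    rewrite (Rsum_ext N (fun a => plogp b (Rsum d (P3 a))) (fun a => plogp b (al a))) in H by (intros; rewrite Ha3; auto).
    rewrite (Rsum_ext d (fun l => plogp b (Rsum N (fun a => P3 a l))) (fun l => plogp b (be l))) in H by (intros; rewrite Hb3; auto).
    exact H. }
  assert (T1 : Rsum N (fun a => Rsum d (fun l => plogp b (P1 a l))) =
               Rsum N (fun a => plogp b (al a)) + Rsum N (fun a => al a * U1 a)).
  { rewrite <- Rsum_add. apply Rsum_ext; auto. }
  assert (T2 : Rsum N (fun a => Rsum d (fun l => plogp b (P2 a l))) =
               Rsum d (fun l => plogp b (be l)) + Rsum d (fun l => be l * V2 l)).
  { rewrite Rsum_swap, <- Rsum_add. apply Rsum_ext; auto. }
  assert (T3a : Rsum N (fun a => Rsum d (fun l => plogp b (P3 a l))) =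
               Rsum N (fun a => plogp b (al a)) + Rsum N (fun a => al a * U3 a)).
  { rewrite <- Rsum_add. apply Rsum_ext; auto. }
  assert (T3b : Rsum N (fun a => Rsum d (fun l => plogp b (P3 a l))) =
               Rsum d (fun l => plogp b (be l)) + Rsum d (fun l => be l * V3 l)).
  { rewrite Rsum_swap, <- Rsum_add. apply Rsum_ext; auto. }
  assert (SLB : cB <= - lam * Rsum N (fun a => al a * U1 a) - mu * Rsum N (fun a => al a * U3 a)).
  { pose proof (Rsum_le N _ _ LB) as H. rewrite Rsum_mulr, Hsa in H.
    rewrite (Rsum_ext N _ (fun a => (-lam) * (al a * U1 a) + (-mu) * (al a * U3 a))) in H by (intros; ring).
    rewrite Rsum_add, !Rsum_mull in H. lra. }
  assert (SLA : cA <= - lam * Rsum d (fun l => be l * V3 l) - mu * Rsum d (fun l => be l * V2 l)).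
  { pose proof (Rsum_le d _ _ LA) as H. rewrite Rsum_mulr, Hsb in H.
    rewrite (Rsum_ext d _ (fun l => (-lam) * (be l * V3 l) + (-mu) * (be l * V2 l))) in H by (intros; ring).
    rewrite Rsum_add, !Rsum_mull in H. lra. }
  rewrite T1, T2. nra.
Qed.

Lemma sand_real D M u : herm D M -> snd (sandwich D u M u) = 0.
Proof.
  intros H.
  assert (E0 : Cconj (sandwich D u M u) = sandwich D u M u).
  { unfold sandwich. rewrite Csum_conj.
    rewrite (Csum_ext D _ (fun j => Csum D (fun k => Cmul (Cmul (Cconj (u k)) (M k j)) (u j)))).
    - apply Csum_swap.
    - intros j Hj. rewrite Csum_conj. apply Csum_ext; intros k Hk.
      rewrite !Cconj_mul, Cconj_conj, (H k j) by auto. ring. }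
  apply (f_equal snd) in E0. unfold Cconj in E0; simpl in E0. lra.
Qed.

Definition prodM (N : nat) (A B : mat) : mat :=
  fun J K => Cmul (A (J mod N)%nat (K mod N)%nat) (B (J / N)%nat (K / N)%nat).

Lemma prod_density N d A B : density N A -> density d B -> density (N*d) (prodM N A B).
Proof.
  intros [HhA [HpA HtA]] [HhB [HpB HtB]].
  split; [|split].
  - intros i j Hi Hj.
    assert (HN : (N <> 0)%nat) by (intro; subst; simpl in Hi; lia).
    unfold prodM. rewrite Cconj_mul.
    rewrite HhA, HhB; auto; try (apply Nat.mod_upper_bound; auto); apply Nat.Div0.div_lt_upper_bound; lia.
  - intros v. destruct (decomp N A HhA HpA) as [w Hw].
    set (u := fun t l => Csum N (fun k => Cmul (Cconj (w t k)) (v (k + N*l)%nat))).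
    assert (Eq : sandwich (N*d) v (prodM N A B) v = Csum N (fun t => sandwich d (u t) B (u t))).
    { rewrite sand_expand.
      rewrite (Csum_ext d _ (fun l => Csum d (fun l' => Csum N (fun j => Csum N (fun k => Csum N (fun t =>
         Cmul (Cmul (Cmul (Cconj (v (j + N*l)%nat)) (w t j)) (Cmul (Cconj (w t k)) (v (k + N*l')%nat))) (B l l'))))))).
      2:{ intros l Hl. apply Csum_ext; intros l' Hl'. apply Csum_ext; intros j Hj. apply Csum_ext; intros k Hk.
          unfold prodM. rewrite !idx_mod, !idx_div by auto. rewrite Hw by auto.
          rewrite <- Csum_mulr, <- Csum_mull, <- Csum_mulr. apply Csum_ext; intros; ring. }
      rewrite (Csum_ext d _ (fun l => Csum d (fun l' => Csum N (fun j => Csum N (fun t => Csum N (fun k =>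
         Cmul (Cmul (Cmul (Cconj (v (j + N*l)%nat)) (w t j)) (Cmul (Cconj (w t k)) (v (k + N*l')%nat))) (B l l'))))))).
      2:{ intros l Hl. apply Csum_ext; intros l' Hl'. apply Csum_ext; intros j Hj. apply Csum_swap. }
      rewrite (Csum_ext d _ (fun l => Csum d (fun l' => Csum N (fun t => Csum N (fun j => Csum N (fun k =>
         Cmul (Cmul (Cmul (Cconj (v (j + N*l)%nat)) (w t j)) (Cmul (Cconj (w t k)) (v (k + N*l')%nat))) (B l l'))))))).
      2:{ intros l Hl. apply Csum_ext; intros l' Hl'. apply Csum_swap. }
      rewrite (Csum_ext d _ (fun l => Csum N (fun t => Csum d (fun l' => Csum N (fun j => Csum N (fun k =>
         Cmul (Cmul (Cmul (Cconj (v (j + N*l)%nat)) (w t j)) (Cmul (Cconj (w t k)) (v (k + N*l')%nat))) (B l l'))))))).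
      2:{ intros l Hl. apply Csum_swap. }
      rewrite Csum_swap. apply Csum_ext; intros t Ht. unfold sandwich, u.
      apply Csum_ext; intros l Hl. apply Csum_ext; intros l' Hl'.
      rewrite Csum_conj, <- Csum_mulr, <- Csum_mulr.
      apply Csum_ext; intros j Hj. rewrite <- Csum_mull. apply Csum_ext; intros k Hk.
      rewrite Cconj_mul, Cconj_conj. ring. }
    rewrite Eq. unfold Re. rewrite Csum_fst. apply Rsum_nonneg. intros. apply HpB.
  - unfold trace. rewrite Csum_split.
    rewrite (Csum_ext d _ (fun l => Cmul (B l l) (Csum N (fun a => A a a)))).
    + rewrite Csum_mulr. fold (trace d B). fold (trace N A). rewrite HtA, HtB. ring.
    + intros l Hl. rewrite <- Csum_mull. apply Csum_ext; intros a Ha. unfold prodM.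
      rewrite idx_mod, idx_div by auto. ring.
Qed.

Lemma prod_sand N d u w u' w' A B :
  sandwich (N*d) (kron N u w) (prodM N A B) (kron N u' w') = Cmul (sandwich N u A u') (sandwich d w B w').
Proof.
  rewrite sand_kron. unfold Qf, sandwich. rewrite <- Csum_mull. apply Csum_ext; intros l Hl.
  rewrite <- Csum_mull. apply Csum_ext; intros l' Hl'. rewrite <- Csum_mulr.
  apply Csum_ext; intros j Hj. rewrite <- Csum_mulr. apply Csum_ext; intros k Hk.
  unfold prodM. rewrite !idx_mod, !idx_div by auto. ring.
Qed.

Lemma outcome_sum D e M : onbasis D e -> density D M -> Rsum D (fun i => outcome D e M i) = 1.
Proof. intros He [Hh [Hp Ht]]. unfold outcome, Re. rewrite <- Csum_fst, trace_onb, Ht by auto. reflexivity. Qed.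

Lemma hent_prod b N d E X A B : onbasis N E -> onbasis d X -> density N A -> density d B ->
  Hent b (N*d) (kb N E X) (prodM N A B) = Hent b N E A + Hent b d X B.
Proof.
  intros HE HX HA HB. rewrite hent_kb.
  pose proof (outcome_sum N E A HE HA) as SA. pose proof (outcome_sum d X B HX HB) as SB.
  destruct HA as [HhA [HpA HtA]]. destruct HB as [HhB [HpB HtB]].
  rewrite (Rsum_ext N _ (fun a => outcome N E A a * Rsum d (fun l => plogp b (outcome d X B l))
                                  + plogp b (outcome N E A a) * Rsum d (fun l => outcome d X B l))).
  - rewrite Rsum_add, Rsum_mulr, Rsum_mulr. change (Rsum N (outcome N E A)) with (Rsum N (fun i => outcome N E A i)).
    rewrite SA, SB. unfold Hent. ring.
  - intros a Ha. rewrite <- Rsum_mull, <- Rsum_mull, <- Rsum_add. apply Rsum_ext; intros l Hl.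
    rewrite prod_sand. 
    replace (Re (Cmul (sandwich N (E a) A (E a)) (sandwich d (X l) B (X l))))
      with (outcome N E A a * outcome d X B l).
    + rewrite plogp_mul by (apply HpA || apply HpB). ring.
    + unfold outcome, Re, Cmul. simpl. rewrite (sand_real N A (E a)), (sand_real d B (X l)) by auto. ring.
Qed.

Lemma near_inf S c eps : is_inf S c -> 0 < eps -> exists v, S v /\ v < c + eps.
Proof.
  intros [H1 H2] He. apply NNPP. intro Hn.
  assert (c + eps <= c). { apply H2. intros v Hv. apply Rnot_lt_le. intro Hlt. apply Hn. eauto. }
  lra.
Qed.

Lemma two_party b lam mu N d E F X Y cA cB : 1 < b -> 0 < lam -> 0 < mu ->
  onbasis N E -> onbasis N F -> onbasis d X -> onbasis d Y ->
  is_inf (cost_set b lam mu N E F) cA -> is_inf (cost_set b lam mu d X Y) cB ->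
  is_inf (cost_set b lam mu (N*d) (kb N E X) (kb N F Y)) (cA + cB).
Proof.
  intros Hb Hl Hm HE HF HX HY HA HB. split.
  - intros v [rho [Hr ->]]. apply lower_bound; auto. apply HA. apply HB.
  - intros c' Hc'. apply Rnot_lt_le. intro Hlt.
    set (eps := (c' - (cA + cB)) / 2).
    assert (Heps : 0 < eps) by (unfold eps; lra).
    destruct (near_inf _ _ eps HA Heps) as [vA [[rA [HrA ->]] HvA]].
    destruct (near_inf _ _ eps HB Heps) as [vB [[rB [HrB ->]] HvB]].
    assert (Hc := Hc' _ (ex_intro _ (prodM N rA rB) (conj (prod_density N d rA rB HrA HrB) eq_refl))).
    rewrite !hent_prod in Hc by auto. unfold eps in *. lra.
Qed.

Lemma onbasis_ext D e e' : (forall i j, (i<D)%nat -> (j<D)%nat -> e i j = e' i j) ->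
  onbasis D e -> onbasis D e'.
Proof. intros H He i j Hi Hj. rewrite <- (He i j Hi Hj). unfold inner. apply Csum_ext; intros.
  rewrite !H; auto. Qed.

Lemma hent_ext b D e e' M : (forall i j, (i<D)%nat -> (j<D)%nat -> e i j = e' i j) ->
  Hent b D e M = Hent b D e' M.
Proof. intros H. unfold Hent. f_equal. apply Rsum_ext; intros i Hi. unfold outcome, sandwich.
  f_equal. f_equal. apply Csum_ext; intros. apply Csum_ext; intros. rewrite !H; auto. Qed.

Lemma is_inf_cost_ext b lam mu D e f e' f' c :
  (forall i j, (i<D)%nat -> (j<D)%nat -> e i j = e' i j) ->
  (forall i j, (i<D)%nat -> (j<D)%nat -> f i j = f' i j) ->
  is_inf (cost_set b lam mu D e f) c -> is_inf (cost_set b lam mu D e' f') c.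
Proof.
  intros He Hf [H1 H2]. split.
  - intros v [r [Hr ->]]. apply H1. exists r. split; auto.
    rewrite (hent_ext b D e e'), (hent_ext b D f f'); auto.
  - intros c' Hc'. apply H2. intros v [r [Hr ->]]. apply Hc'. exists r. split; auto.
    rewrite (hent_ext b D e e'), (hent_ext b D f f'); auto.
Qed.

Lemma nprod_factor d m n : (m < n)%nat -> exists K, nprod n d = (nprod m d * d m * K)%nat.
Proof.
  induction n; intros H; [lia|]. simpl. destruct (Nat.eq_dec m n).
  - subst. exists 1%nat. lia.
  - destruct IHn as [K HK]; [lia|]. exists (K * d n)%nat. rewrite HK. lia.
Qed.

Lemma digit_mod d m n i : (m < n)%nat -> nprod n d <> 0%nat ->
  digit d m i = digit d m (i mod nprod n d).
Proof.
  intros Hm HN. destruct (nprod_factor d m n Hm) as [K HK]. unfold digit.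
  set (N := nprod n d) in *. set (P := nprod m d) in *. set (D := d m) in *.
  assert (HP : P <> 0%nat) by (intro E0; rewrite E0 in HK; simpl in HK; lia).
  assert (HD : D <> 0%nat) by (intro E0; rewrite E0 in HK; rewrite Nat.mul_0_r in HK; simpl in HK; lia).
  pose proof (Nat.div_mod i N HN) as Hi.
  assert (E1 : (i / P = D * K * (i / N) + (i mod N) / P)%nat).
  { rewrite <- Nat.div_add_l by auto. f_equal. rewrite Hi at 1. rewrite HK at 1. ring. }
  rewrite E1. rewrite Nat.add_comm.
  replace (D * K * (i / N))%nat with ((K * (i / N)) * D)%nat by ring.
  apply Nat.Div0.mod_add.
Qed.

Lemma digit_last d n i : (i < nprod n d * d n)%nat -> digit d n i = (i / nprod n d)%nat.
Proof.
  intros H. unfold digit. apply Nat.mod_small.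
  assert (nprod n d <> 0%nat) by (intro E0; rewrite E0 in H; simpl in H; lia).
  apply Nat.Div0.div_lt_upper_bound. lia.
Qed.

Lemma Cprod_ext n f g : (forall m, (m < n)%nat -> f m = g m) -> Cprod n f = Cprod n g.
Proof. induction n; intros H; simpl; auto. rewrite IHn by (intros; apply H; lia). rewrite H by lia. auto. Qed.

Lemma prod_basis_succ n d X i j : (i < nprod n d * d n)%nat -> (j < nprod n d * d n)%nat ->
  prod_basis (S n) d X i j = kb (nprod n d) (prod_basis n d X) (X n) i j.
Proof.
  intros Hi Hj. assert (HN : nprod n d <> 0%nat) by (intro E0; rewrite E0 in Hi; simpl in Hi; lia).
  unfold prod_basis, kb, kron. simpl. f_equal.
  - apply Cprod_ext; intros m Hm. rewrite <- !(digit_mod d m n) by auto. reflexivity.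
  - rewrite !digit_last by auto. reflexivity.
Qed.

Theorem mainTheorem2 (b : R) (hb : 1 < b) (lam mu : R) (hlam : 0 < lam) (hmu : 0 < mu)
  (n : nat) (d : nat -> nat) (X Y : nat -> nat -> vec)
  (hX : forall m, (m < n)%nat -> onbasis (d m) (X m))
  (hY : forall m, (m < n)%nat -> onbasis (d m) (Y m))
  (c : nat -> R)
  (hc : forall m, (m < n)%nat -> is_inf (cost_set b lam mu (d m) (X m) (Y m)) (c m)) :
  is_inf (cost_set b lam mu (totdim n d) (prod_basis n d X) (prod_basis n d Y))
         (Rsum n c).
Proof.
  assert (Main : onbasis (totdim n d) (prod_basis n d X) /\ onbasis (totdim n d) (prod_basis n d Y) /\
    is_inf (cost_set b lam mu (totdim n d) (prod_basis n d X) (prod_basis n d Y)) (Rsum n c)).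
  2: apply Main.
  induction n as [|n IH].
  - unfold totdim, prod_basis. simpl.
    assert (Hon : onbasis 1 (fun _ _ => C1)).
    { intros i j Hi Hj. assert (i = 0%nat) by lia. assert (j = 0%nat) by lia. subst.
      unfold inner. simpl. apply Cext; unfold C1, C0, Cadd, Cmul, Cconj; simpl; ring. }
    split; [exact Hon|split; [exact Hon|]].
    assert (Hval : forall rho, density 1 rho ->
       lam * Hent b 1 (fun _ _ => C1) rho + mu * Hent b 1 (fun _ _ => C1) rho = 0).
    { intros rho [_ [_ Ht]]. unfold trace in Ht. simpl in Ht.
      assert (Hr : rho 0%nat 0%nat = C1).
      { rewrite <- Ht. apply Cext; unfold Cadd, C0; simpl; ring. }
      assert (Ho : outcome 1 (fun _ _ => C1) rho 0%nat = 1).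
      { unfold outcome, sandwich. simpl. rewrite Hr. unfold Re, Cadd, Cmul, Cconj, C0, C1; simpl; ring. }
      unfold Hent. simpl. rewrite Ho. unfold plogp. destruct Req_dec_T; [lra|].
      rewrite ln_1. unfold Rdiv. ring. }
    split.
    + intros v [rho [Hr ->]]. rewrite Hval; auto. lra.
    + intros c' Hc'. replace 0 with (lam * Hent b 1 (fun _ _ => C1) (fun _ _ => C1) + mu * Hent b 1 (fun _ _ => C1) (fun _ _ => C1)).
      * apply Hc'. exists (fun _ _ => C1). split; auto.
        split; [|split].
        -- intros; rewrite Cconj_1; auto.
        -- intros v. unfold sandwich. simpl. unfold Re, Cadd, Cmul, Cconj, C0, C1; simpl. nra.
        -- unfold trace; simpl. apply Cext; unfold Cadd, C0, C1; simpl; ring.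
      * apply Hval. split; [|split].
        -- intros; rewrite Cconj_1; auto.
        -- intros v. unfold sandwich. simpl. unfold Re, Cadd, Cmul, Cconj, C0, C1; simpl. nra.
        -- unfold trace; simpl. apply Cext; unfold Cadd, C0, C1; simpl; ring.
  - destruct IH as [HEo [HFo Hinf]].
    { intros; apply hX; lia. } { intros; apply hY; lia. } { intros; apply hc; lia. }
    assert (HXn := hX n ltac:(lia)). assert (HYn := hY n ltac:(lia)). assert (Hcn := hc n ltac:(lia)).
    unfold totdim in *. change (nprod (S n) d) with (nprod n d * d n)%nat.
    assert (HT := two_party b lam mu (nprod n d) (d n) _ _ _ _ _ _ hb hlam hmu HEo HFo HXn HYn Hinf Hcn).
    assert (EX : forall i j, (i < nprod n d * d n)%nat -> (j < nprod n d * d n)%nat ->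
       kb (nprod n d) (prod_basis n d X) (X n) i j = prod_basis (S n) d X i j)
      by (intros; symmetry; apply prod_basis_succ; auto).
    assert (EY : forall i j, (i < nprod n d * d n)%nat -> (j < nprod n d * d n)%nat ->
       kb (nprod n d) (prod_basis n d Y) (Y n) i j = prod_basis (S n) d Y i j)
      by (intros; symmetry; apply prod_basis_succ; auto).
    split; [|split].
    + eapply onbasis_ext; [exact EX|]. apply onbasis_kb; auto.
    + eapply onbasis_ext; [exact EY|]. apply onbasis_kb; auto.
    + simpl Rsum. eapply is_inf_cost_ext; [exact EX | exact EY | exact HT].
Qed.
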